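(* Let $G$ be a finite graph with nonnegative edge lengths, let $\theta\geq 0$, and let $v$ be a vertex of $G$. Consider the game Graph Exploration on $G$ started at $v$ with parameter $\theta$. Then Bob's payoff under optimal play by both players equals $M(G)-M(G-v)$.
   Context: Graph Exploration: two players, Alice and Bob, take turns choosing the next edge of a self-avoiding walk in $G$ starting at $v$, with Alice moving first. The player who chooses an edge pays its length to the opponent. At each turn the player to move may instead (and, if no move is available, must) terminate the game by paying $\theta/2$ to the opponent. Each player tries to maximize their total payoff; this is a finite zero-sum game of perfect information. For a finite graph $H$ with edge lengths, $M(H)$ denotes the cost of the diluted matching problem: the minimum, over all partial matchings of $H$ (sets of edges no two sharing a vertex), of the sum of the lengths of the edges in the matching plus $\theta/2$ times the number of vertices not covered by it. $G-v$ is the graph obtained from $G$ by deleting $v$ and its incident edges. *)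

(* Defs.v *)
From HB Require Import structures.
From mathcomp Require Import all_boot all_order all_algebra.
Set Implicit Arguments. Unset Strict Implicit. Unset Printing Implicit Defensive.
Import Order.TTheory GRing.Theory Num.Theory.
Local Open Scope ring_scope.

(* A finite (simple) graph is given by a vertex type T : finType and a
   symmetric irreflexive adjacency relation e : rel T; edge lengths are
   given by w : T -> T -> R (only its values on edges matter). *)

Section GraphExploration.
Variables (R : realFieldType) (T : finType) (e : rel T) (w : T -> T -> R)
          (theta : R).

(* Value of the Graph Exploration game for the player about to move, i.e.
   that player's optimal net payoff (amount received minus amount paid from
   now on), when the walk has visited the vertices in S and currently sits
   at u.  The mover may terminate (paying theta/2, net -theta/2) or move
   along an edge ux to an unvisited vertex x (paying w u x, after which the
   opponent is to move; zero-sum, so the mover then gets minus the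
   opponent's value). *)
Fixpoint ge_value (n : nat) (S : {set T}) (u : T) : R :=
  match n with
  | 0%N => - (theta / 2%:R)
  | n'.+1 =>
      \big[Num.max/- (theta / 2%:R)]_(x | e u x && (x \notin S))
         (- w u x - ge_value n' (x |: S) x)
  end.

(* Game started at v: the walk has visited {v}; Alice moves first.
   The fuel #|T| suffices since each move visits a new vertex. *)
Definition alice_payoff (v : T) : R := ge_value #|T| [set v] v.
Definition bob_payoff (v : T) : R := - alice_payoff v.

(* Partial matchings of the induced subgraph on the vertex set A,
   represented as sets of ordered pairs (x, y) with xy an edge, both
   endpoints in A, and distinct pairs having disjoint endpoint sets
   (so each matched edge occurs exactly once). *)
Definition endpoints (p : T * T) : {set T} := [set p.1; p.2].

Definition is_matching (A : {set T}) (P : {set T * T}) : bool :=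
  [forall p in P, [&& e p.1 p.2, p.1 \in A & p.2 \in A]] &&
  [forall p in P, forall q in P, (p != q) ==> [disjoint endpoints p & endpoints q]].

Definition covered (P : {set T * T}) : {set T} := \bigcup_(p in P) endpoints p.

Definition matching_cost (A : {set T}) (P : {set T * T}) : R :=
  \sum_(p in P) w p.1 p.2 + (theta / 2%:R) * (#|A :\: covered P|)%:R.

(* Diluted matching cost M(H) of the induced subgraph H on vertex set A.
   The empty matching (cost theta/2 * #|A|) is always admissible, and is
   also used as the neutral element of the minimum. *)
Definition diluted_M (A : {set T}) : R :=
  \big[Num.min/(theta / 2%:R) * (#|A|)%:R]_(P : {set T * T} | is_matching A P)
     matching_cost A P.

End GraphExploration.

(* Main.v *)
Require Import Defs.
From HB Require Import structures.
From mathcomp Require Import all_boot all_order all_algebra.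
From mathcomp Require Import ring.
Import Order.TTheory GRing.Theory Num.Theory.
Local Open Scope ring_scope.
Set Implicit Arguments. Unset Strict Implicit. Unset Printing Implicit Defensive.

Section Proof.
Variables (R : realFieldType) (T : finType) (e : rel T) (w : T -> T -> R)
          (theta : R).
Hypotheses (esym : symmetric e) (irr : irreflexive e)
  (wsym : forall x y, e x y -> w x y = w y x).

Local Notation m := (diluted_M e w theta).
Local Notation cost := (matching_cost w theta).
Local Notation h := (theta / 2%:R).

Lemma matchingP (A : {set T}) (P : {set T * T}) : is_matching e A P <->
  (forall p, p \in P -> [&& e p.1 p.2, p.1 \in A & p.2 \in A]) /\
  (forall p q, p \in P -> q \in P -> p != q -> [disjoint endpoints p & endpoints q]).
Proof.
rewrite /is_matching; split.
- case/andP => /forallP H1 /forallP H2; split.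
  + move=> p pP; exact: (implyP (H1 p) pP).
  + move=> p q pP qP; move: (implyP (H2 p) pP) => /forallP /(_ q) /implyP /(_ qP) /implyP; exact.
- case=> H1 H2; apply/andP; split; apply/forallP => p; apply/implyP => pP.
  + exact: H1.
  + apply/forallP => q; apply/implyP => qP; apply/implyP; exact: H2.
Qed.

Lemma endpointsE (p : T * T) (y : T) : (y \in endpoints p) = (y == p.1) || (y == p.2).
Proof. by rewrite !inE. Qed.

Lemma coveredP (P : {set T * T}) y : reflect (exists2 p, p \in P & y \in endpoints p) (y \in covered P).
Proof. exact: bigcupP. Qed.

Lemma match_cov (A : {set T}) (P : {set T * T}) : is_matching e A P -> covered P \subset A.
Proof.
case/matchingP => H1 _; apply/subsetP => y /coveredP [p pP]; rewrite endpointsE.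
by case/and3P: (H1 p pP) => _ h1 h2; case/orP => /eqP ->.
Qed.

Lemma match_sub (A A' : {set T}) (P Q : {set T * T}) : is_matching e A P -> Q \subset P ->
  covered Q \subset A' -> is_matching e A' Q.
Proof.
move=> /matchingP [H1 H2] /subsetP QP /subsetP cQ; apply/matchingP; split.
- move=> q qQ; case/and3P: (H1 q (QP q qQ)) => -> _ _ /=.
  by apply/andP; split; apply: cQ; apply/coveredP; exists q => //; rewrite endpointsE eqxx ?orbT.
- move=> p q pQ qQ; exact: H2 (QP _ pQ) (QP _ qQ).
Qed.

Lemma match_ext (A : {set T}) (P : {set T * T}) p : is_matching e A P -> e p.1 p.2 ->
  [disjoint endpoints p & A] -> is_matching e (endpoints p :|: A) (p |: P).
Proof.
move=> HP ep dis; have cP := match_cov HP.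
have key : forall q, q \in P -> [disjoint endpoints p & endpoints q].
  move=> q qP; apply/pred0P => y /=; apply/negbTE/negP => /andP [y1 y2].
  have : y \in A by apply: (subsetP cP); apply/coveredP; exists q.
  by rewrite (disjointFr dis y1).
case/matchingP: HP => H1 H2; apply/matchingP; split.
- move=> q; rewrite in_setU1 => /orP [/eqP -> | qP].
  + by rewrite ep !inE !eqxx ?orbT.
  + by case/and3P: (H1 q qP) => -> a1 a2; rewrite !inE a1 a2 !orbT.
- move=> q r; rewrite !in_setU1 => /orP [/eqP -> | qP] /orP [/eqP -> | rP];
    rewrite ?eqxx //.
  + by move=> _; apply: key.
  + by move=> _; rewrite disjoint_sym; apply: key.
  + exact: H2.
Qed.

Lemma covered0 : covered (set0 : {set T * T}) = set0.
Proof. by rewrite /covered big_set0. Qed.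

Lemma coveredU1 (p : T * T) P : covered (p |: P) = endpoints p :|: covered P.
Proof. by rewrite /covered bigcup_setU big_set1. Qed.

Lemma cost_ext (A : {set T}) (P : {set T * T}) p : p \notin P -> [disjoint endpoints p & A] ->
  cost (endpoints p :|: A) (p |: P) = w p.1 p.2 + cost A P.
Proof.
move=> pP dis; rewrite /matching_cost big_setU1 //= coveredU1 -addrA.
have -> : (endpoints p :|: A) :\: (endpoints p :|: covered P) = A :\: covered P.
  move: dis; move: (endpoints p) => E dis.
  apply/setP => y; case: (boolP (y \in E)) => hy.
  - by rewrite in_setD !in_setU hy /= in_setD (disjointFr dis hy) andbF.
  - by rewrite in_setD !in_setU (negbTE hy) /= in_setD.
by [].
Qed.

Lemma cost_add1 (A : {set T}) (P : {set T * T}) u : u \notin A -> u \notin covered P ->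
  cost (u |: A) P = h + cost A P.
Proof.
move=> uA uC; rewrite /matching_cost.
have -> : (u |: A) :\: covered P = u |: (A :\: covered P).
  apply/setP=> y; rewrite !inE; case: (y =P u) => [->|_]; first by rewrite uC.
  by [].
rewrite cardsU1 in_setD (negbTE uA) andbF /= natrD; ring.
Qed.

Lemma M_le (A : {set T}) P : is_matching e A P -> m A <= cost A P.
Proof. by move=> HP; rewrite /diluted_M (bigD1 P) //= ge_min lexx. Qed.

Lemma M_ex (A : {set T}) : exists2 P, is_matching e A P & m A = cost A P.
Proof.
rewrite /diluted_M.
apply: (big_ind (fun y => exists2 P, is_matching e A P & y = cost A P)).
- exists set0.
  + by apply/matchingP; split => p; rewrite in_set0.
  + by rewrite /matching_cost big_set0 covered0 setD0 add0r.
- move=> x y [P1 h1 ->] [P2 h2 ->].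
  by have [_|_] := leP (cost A P1) (cost A P2); [exists P1 | exists P2].
- by move=> P hP; exists P.
Qed.

Lemma bigmin_le (P : pred T) (F : T -> R) (a : R) i :
  P i -> \big[Num.min/a]_(j | P j) F j <= F i.
Proof. by move=> Pi; rewrite (bigD1 i) //= ge_min lexx. Qed.

Lemma bigmin_le_idx (P : pred T) (F : T -> R) (a : R) :
  \big[Num.min/a]_(j | P j) F j <= a.
Proof.
apply: (big_rec (fun y => y <= a)) => // i x _ hx.
by rewrite ge_min hx orbT.
Qed.

Lemma le_bigmin (P : pred T) (F : T -> R) (a x : R) :
  x <= a -> (forall i, P i -> x <= F i) -> x <= \big[Num.min/a]_(j | P j) F j.
Proof.
move=> xa xF; apply: (big_rec (fun y => x <= y)) => // i y Pi hy.
by rewrite le_min hy xF.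
Qed.

Lemma setEbp (u x : T) (B : {set T}) : x \in B -> [set u; x] :|: (B :\ x) = u |: B.
Proof.
move=> xB; apply/setP => y; rewrite !inE.
case: (y =P x) => [->|_] /=; first by rewrite xB !orbT.
by rewrite orbF.
Qed.

Lemma dis_bp (u x : T) (B : {set T}) : u \notin B -> [disjoint [set u; x] & B :\ x].
Proof.
move=> uB; apply/pred0P => y /=; rewrite !inE.
case: (y =P x) => [_|_] /=; first by rewrite andbF.
rewrite orbF; case: (y =P u) => [->|] //=; by rewrite (negbTE uB).
Qed.

Lemma M_rec (B : {set T}) u : u \notin B -> m (u |: B) =
  \big[Num.min/(h + m B)]_(x | e u x && (x \in B)) (w u x + m (B :\ x)).
Proof.
move=> uB; apply/eqP; rewrite eq_le; apply/andP; split.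
- apply: le_bigmin.
  + have [P HP ->] := M_ex B; have cP := match_cov HP.
    have uC : u \notin covered P by apply: contra uB; apply: (subsetP cP).
    rewrite -(cost_add1 uB uC); apply: M_le; apply: match_sub (HP) (subxx _) _.
    exact: subset_trans cP (subsetUr _ _).
  + move=> x /andP [eux xB]; have [P HP ->] := M_ex (B :\ x).
    have pP : (u, x) \notin P.
      apply: contra uB => pP.
      have : u \in covered P by apply/coveredP; exists (u, x) => //; rewrite !inE eqxx.
      by move/(subsetP (match_cov HP)); rewrite inE => /andP [].
    have := M_le (match_ext (p := (u, x)) HP eux (dis_bp x uB)).
    by rewrite cost_ext //= ?dis_bp // setEbp.
- have [P HP ->] := M_ex (u |: B); have cP := match_cov HP.
  case: (boolP (u \in covered P)) => uC.
  + case/coveredP: uC => p pP up.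
    have [x [Ep wp eux]] : exists x, [/\ endpoints p = [set u; x], w p.1 p.2 = w u x & e u x].
      case/matchingP: (HP) => H1 _; case/and3P: (H1 p pP) => ep _ _.
      move: up; rewrite !inE => /orP [/eqP Hu | /eqP Hu].
      * by exists p.2; rewrite Hu /endpoints.
      * exists p.1; rewrite Hu /endpoints setUC; split => //.
          exact: wsym.
        by rewrite esym.
    have xu : x != u by apply: (contraTneq _ eux) => ->; rewrite irr.
    have xB : x \in B.
      have : x \in u |: B.
        by apply: (subsetP cP); apply/coveredP; exists p => //; rewrite Ep !inE eqxx orbT.
      by rewrite in_setU1 (negbTE xu).
    have EP : P = p |: (P :\ p) by rewrite setD1K.
    have pQ : p \notin P :\ p by rewrite !inE eqxx.
    have HQ : is_matching e (B :\ x) (P :\ p).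
      apply: match_sub (HP) (subD1set _ _) _.
      apply/subsetP=> y /coveredP [q]; move=> /setD1P [qp qP] yq.
      have yC : y \in u |: B by apply: (subsetP cP); apply/coveredP; exists q.
      case/matchingP: (HP) => _ H2.
      have := disjointFr (H2 _ _ qP pP qp) yq; rewrite Ep !inE => /norP [yu yx].
      by rewrite in_setU1 (negbTE yu) /= in yC; rewrite yx yC.
    rewrite EP -(setEbp u xB) -Ep cost_ext //; last by rewrite Ep dis_bp.
    rewrite wp; apply: le_trans (@bigmin_le _ _ _ x _) _; first by rewrite eux xB.
    by rewrite lerD2l; apply: M_le.
  + rewrite cost_add1 //; apply: (le_trans (@bigmin_le_idx _ _ _)).
    rewrite lerD2l; apply: M_le; apply: match_sub (HP) (subxx _) _.
    apply/subsetP=> y yC; have := subsetP cP y yC; rewrite in_setU1 => /orP [/eqP yu|//].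
    by rewrite yu in yC; rewrite yC in uC.
Qed.


Lemma maxB (a b c : R) : Num.max (a - b) (a - c) = a - Num.min b c.
Proof.
have [bc|cb] := leP b c.
- by rewrite max_l // lerD2l lerN2.
- by rewrite max_r // lerD2l lerN2 ltW.
Qed.

Lemma V_eq (n : nat) (S : {set T}) (u : T) : u \in S -> (#|~: S| <= n)%N ->
  ge_value e w theta n S u = m (~: S) - m (u |: ~: S).
Proof.
elim: n S u => [|n IH] S u uS hn /=.
- have -> : ~: S = set0 by apply/eqP; rewrite -cards_eq0 -leqn0.
  rewrite M_rec ?in_set0 // big_pred0 => [|x]; last by rewrite in_set0 andbF.
  ring.
- have uS' : u \notin ~: S by rewrite in_setC uS.
  rewrite M_rec //.
  under [in RHS]eq_bigl => x do rewrite in_setC.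
  apply: (big_rec2 (fun y1 y2 => y1 = m (~: S) - y2)); first by ring.
  move=> x y1 y2 /andP [eux xS] ->.
  have E : ~: (x |: S) = ~: S :\ x.
    by apply/setP => y; rewrite !inE negb_or andbC.
  rewrite IH; last first.
  - have := cardsD1 x (~: S); rewrite in_setC xS E => h1.
    by move: hn; rewrite h1 add1n ltnS.
  - by rewrite setU11.
  rewrite E setD1K ?in_setC // -maxB; congr Num.max; ring.
Qed.

End Proof.

Theorem proposition1 (R : realFieldType) (T : finType) (e : rel T)
    (w : T -> T -> R) (theta : R) (v : T) :
  symmetric e -> irreflexive e ->
  (forall x y, e x y -> w x y = w y x) ->
  (forall x y, e x y -> 0 <= w x y) ->
  0 <= theta ->
  bob_payoff e w theta v =
    diluted_M e w theta [set: T] - diluted_M e w theta [set~ v].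
Proof.
move=> es ir ws _ _.
rewrite /bob_payoff /alice_payoff (V_eq theta es ir ws); last 2 first.
- by rewrite set11.
- exact: max_card.
have -> : v |: ~: [set v] = [set: T] by apply/setP => y; rewrite !inE orbN.
ring.
Qed.
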